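(* Let $0\le t_0<t$, let $\bm{D}\in\mathbb{R}^{n\times n}$ be a constant diagonal matrix with positive diagonal entries, and take $\bm{Q}_\tau=2\bm{D}$, $\bm{A}_\tau=\bm{0}$, $\hat{\bm{B}}_\tau=\sqrt2\,\bm{I}$ for all $\tau\in[t_0,t]$. Then, with $\bm{M}_{tt_0}$ defined in the context and $\omega_i:=2\sqrt{D_{ii}}$, for all $\bm{x},\bm{y}\in\mathbb{R}^n$, $$\frac12\begin{pmatrix}\bm{x}\\\bm{y}\end{pmatrix}^{\!\top}\bm{M}_{tt_0}\begin{pmatrix}\bm{x}\\\bm{y}\end{pmatrix}=\frac12\sum_{i=1}^n\frac{\omega_i(x_i^2+y_i^2)\cosh(\omega_i(t-t_0))-2\omega_i x_iy_i}{2\sinh(\omega_i(t-t_0))}.$$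
   Context: For matrix functions $\bm{A}_\tau\in\mathbb{R}^{n\times n}$, $\hat{\bm{B}}_\tau\in\mathbb{R}^{n\times m}$, $\bm{Q}_\tau\succeq\bm{0}$ on $[t_0,t]$: $\bm{\Pi}(\tau,\bm{K}_1,t)$ denotes the value at $\tau\in[t_0,t]$ of the solution, solved backward in time, of the Riccati ODE $\dot{\bm{K}}_\tau=-\bm{A}_\tau^\top\bm{K}_\tau-\bm{K}_\tau\bm{A}_\tau+\bm{K}_\tau\hat{\bm{B}}_\tau\hat{\bm{B}}_\tau^\top\bm{K}_\tau-\bm{Q}_\tau$, $\bm{K}_{\tau=t}=\bm{K}_1$. Let $\hat{\bm{A}}_\tau:=\bm{A}_\tau-\hat{\bm{B}}_\tau\hat{\bm{B}}_\tau^\top\bm{\Pi}(\tau,\bm{0},t)$, $\hat{\bm{\Phi}}_{t\tau}$ its state transition matrix from $\tau$ to $t$, $\hat{\bm{\Gamma}}_{tt_0}:=\int_{t_0}^t\hat{\bm{\Phi}}_{t\sigma}\hat{\bm{B}}_\sigma\hat{\bm{B}}_\sigma^\top\hat{\bm{\Phi}}_{t\sigma}^\top\mathrm{d}\sigma$, and $$\bm{M}_{tt_0}:=\begin{bmatrix}\hat{\bm{\Phi}}_{tt_0}^\top\hat{\bm{\Gamma}}_{tt_0}^{-1}\hat{\bm{\Phi}}_{tt_0}+\bm{\Pi}(t_0,\bm{0},t) & -\hat{\bm{\Phi}}_{tt_0}^\top\hat{\bm{\Gamma}}_{tt_0}^{-1}\\ -\hat{\bm{\Gamma}}_{tt_0}^{-1}\hat{\bm{\Phi}}_{tt_0}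 & \hat{\bm{\Gamma}}_{tt_0}^{-1}\end{bmatrix}.$$ *)

(* Defs.v *)
From HB Require Import structures.
From mathcomp Require Import all_boot all_order all_algebra.
From mathcomp Require Import all_classical all_reals all_analysis.
Set Implicit Arguments. Unset Strict Implicit. Unset Printing Implicit Defensive.
Import Order.TTheory GRing.Theory Num.Theory.
Import numFieldNormedType.Exports.
Local Open Scope classical_set_scope.
Local Open Scope ring_scope.

Section Defs.
Variable R : realType.

Definition coshR (z : R) : R := (expR z + expR (- z)) / 2.
Definition sinhR (z : R) : R := (expR z - expR (- z)) / 2.

(* P is (a representative of) Pi(., K1, t): the solution on [t0,t],
   solved backward from P t = K1, of the matrix Riccati ODE
   dK/dtau = -A^T K - K A + K B B^T K - Q  (stated entrywise). *)
Definition riccati_sol n m (A : R -> 'M[R]_n) (B : R -> 'M[R]_(n, m))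
  (Q : R -> 'M[R]_n) (t0 t : R) (K1 : 'M[R]_n) (P : R -> 'M[R]_n) : Prop :=
  P t = K1 /\
  forall s, t0 <= s <= t -> forall i j,
    is_derive s 1 (fun r => P r i j)
      ((- (A s)^T *m P s - P s *m A s + P s *m B s *m (B s)^T *m P s - Q s) i j).

Definition Ahat n m (A : R -> 'M[R]_n) (B : R -> 'M[R]_(n, m))
  (P : R -> 'M[R]_n) : R -> 'M[R]_n :=
  fun s => A s - B s *m (B s)^T *m P s.

Definition transition_mx n (Ah : R -> 'M[R]_n) (t0 t : R)
  (Phi : R -> R -> 'M[R]_n) : Prop :=
  (forall s, t0 <= s <= t -> Phi s s = 1%:M) /\
  forall r s, t0 <= r <= t -> t0 <= s <= t -> forall i j,
    is_derive r 1 (fun u => Phi u s i j) ((Ah r *m Phi r s) i j).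

Definition gramian n m (B : R -> 'M[R]_(n, m)) (Phi : R -> R -> 'M[R]_n)
  (t0 t : R) : 'M[R]_n :=
  \matrix_(i, j) (\int[lebesgue_measure]_(s in `[t0, t]) 
     ((Phi t s *m B s *m (B s)^T *m (Phi t s)^T) i j)).

Definition Mtt0 n (P : R -> 'M[R]_n) (Phi : R -> R -> 'M[R]_n)
  (Gam : 'M[R]_n) (t0 t : R) : 'M[R]_(n + n) :=
  let Gi := invmx Gam in
  block_mx ((Phi t t0)^T *m Gi *m Phi t t0 + P t0) (- ((Phi t t0)^T *m Gi))
           (- (Gi *m Phi t t0)) Gi.

End Defs.

(* Main.v *)
Require Import Defs.
From HB Require Import structures.
From mathcomp Require Import all_boot all_order all_algebra.
From mathcomp Require Import all_classical all_reals all_analysis.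
From mathcomp Require Import ring lra.
Set Implicit Arguments. Unset Strict Implicit. Unset Printing Implicit Defensive.
Import Order.TTheory GRing.Theory Num.Theory.
Import numFieldNormedType.Exports.
Local Open Scope classical_set_scope.
Local Open Scope ring_scope.

Section Hyp.
Variable R : realType.

Lemma is_derive_expR_lin (a b x : R) :
  is_derive x 1 (fun s => expR (a * s + b)) (a * expR (a * x + b)).
Proof.
have h : is_derive x 1 (fun s : R => a * s + b) a.
  by apply: is_derive_eq; rewrite addr0 [_%:A]mulr1.
have := @is_derive1_comp R expR (fun s => a * s + b) x _ _ (is_derive_expR _) h.
by rewrite mulrC.
Qed.

Lemma is_derive_coshR_lin (a b x : R) :
  is_derive x 1 (fun s => coshR (a * s + b)) (a * sinhR (a * x + b)).
Proof.
have -> : (fun s => coshR (a * s + b)) =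
  (fun s => (expR (a * s + b) + expR ((- a) * s + (- b))) / 2).
  by apply/funext => s; rewrite /coshR opprD mulNr.
have h1 := is_derive_expR_lin a b x.
have h2 := is_derive_expR_lin (- a) (- b) x.
have h3 := is_deriveD h1 h2.
have h4 := is_deriveM h3 (is_derive_cst (2^-1 : R) x 1).
apply: is_derive_eq.
rewrite scaler0 add0r /cst /sinhR /GRing.scale /= opprD !mulNr; by field.
Qed.

Lemma is_derive_sinhR_lin (a b x : R) :
  is_derive x 1 (fun s => sinhR (a * s + b)) (a * coshR (a * x + b)).
Proof.
have -> : (fun s => sinhR (a * s + b)) =
  (fun s => (expR (a * s + b) - expR ((- a) * s + (- b))) / 2).
  by apply/funext => s; rewrite /sinhR opprD mulNr.
have h1 := is_derive_expR_lin a b x.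
have h2 := is_derive_expR_lin (- a) (- b) x.
have h3 := is_deriveB h1 h2.
have h4 := is_deriveM h3 (is_derive_cst (2^-1 : R) x 1).
apply: is_derive_eq.
rewrite scaler0 add0r /cst /coshR /GRing.scale /= opprD !mulNr; by field.
Qed.

Lemma coshR_sinhR (z : R) : coshR z ^+ 2 - sinhR z ^+ 2 = 1.
Proof.
rewrite /coshR /sinhR.
have h : expR z * expR (- z) = 1 by rewrite -expRD subrr expR0.
rewrite -{3}h; by field.
Qed.

Lemma coshR_gt0 (z : R) : 0 < coshR z.
Proof. by rewrite /coshR divr_gt0 // addr_gt0 // expR_gt0. Qed.

Lemma sinhR_gt0 (z : R) : 0 < z -> 0 < sinhR z.
Proof.
move=> z0; rewrite /sinhR divr_gt0 // subr_gt0 ltr_expR; lra.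
Qed.

Lemma coshR0 : coshR (0:R) = 1.
Proof. rewrite /coshR oppr0 expR0; by field. Qed.

Lemma sinhR0 : sinhR (0:R) = 0.
Proof. by rewrite /sinhR oppr0 subrr mul0r. Qed.

Lemma gronwall_gen (f df : R -> R) (a b C : R) :
  (forall r, a <= r <= b -> is_derive r 1 f (df r)) ->
  (forall r, a <= r <= b -> 0 <= f r) ->
  (forall r, a <= r <= b -> `|df r| <= C * f r) ->
  (f a = 0 \/ f b = 0) -> forall r, a <= r <= b -> f r = 0.
Proof.
move=> fd fp fb fab r /andP[ar rb].
have ab : a <= b by apply: le_trans rb.
have inab : forall x, x \in `]a, b[ -> a <= x <= b.
  by move=> x; rewrite in_itv /= => /andP[/ltW -> /ltW ->].
have incc : forall x, x \in `[a, b] -> a <= x <= b.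
  by move=> x; rewrite in_itv /=.
have gen : forall K : R, forall x, a <= x <= b ->
  is_derive x 1 (f * (fun s => expR (K * s + 0)))
    (expR (K * x + 0) * (df x + K * f x)).
  move=> K x xab.
  have := is_deriveM (fd x xab) (is_derive_expR_lin K 0 x).
  move=> h; apply: is_derive_eq.
  rewrite /GRing.scale /=; ring.
have gcont : forall K, {within `[a, b], continuous (f * (fun s => expR (K * s + 0)))}.
  move=> K; apply: derivable_within_continuous => x /incc xab.
  by have [] := gen K x xab.
have g0 : forall K x, a <= x <= b -> (f * (fun s => expR (K * s + 0))) x = 0 -> f x = 0.
  move=> K x _; rewrite /= => /eqP; rewrite mulf_eq0 => /orP[/eqP //|].
  by rewrite gt_eqF // expR_gt0.
have gp : forall K x, a <= x <= b -> 0 <= (f * (fun s => expR (K * s + 0))) x.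
  by move=> K x xab; rewrite /= mulr_ge0 // ?fp // ltW // expR_gt0.
case: fab => [fa0|fb0].
- apply: (g0 (- C)); first by rewrite ar rb.
  apply/eqP; rewrite eq_le gp ?ar ?rb //=.
  have d1 : forall x, x \in `]a, b[ -> derivable (f * (fun s => expR (- C * s + 0))) x 1.
    by move=> x /inab xab; have [] := gen (- C) x xab.
  have d2 : forall x, x \in `]a, b[ -> (f * (fun s => expR (- C * s + 0)))^`()%classic x <= 0.
    move=> x /inab xab; rewrite derive1E (@derive_val _ _ _ _ _ _ _ (gen (- C) x xab)).
    rewrite pmulr_rle0 ?expR_gt0 //.
    have := fb x xab; rewrite mulNr subr_le0; apply: le_trans; exact: ler_norm.
  have := @ler0_derive1_nincr R _ a b d1 d2 (gcont (- C)) a r (lexx a) ar rb.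
  rewrite andbT => H; apply: le_trans H _.
  by rewrite (_ : (f * _) a = f a * expR (- C * a + 0)) // fa0 mul0r.
- apply: (g0 C); first by rewrite ar rb.
  apply/eqP; rewrite eq_le gp ?ar ?rb //.
  have d1 : forall x, x \in `]a, b[ -> derivable (f * (fun s => expR (C * s + 0))) x 1.
    by move=> x /inab xab; have [] := gen C x xab.
  have d2 : forall x, x \in `]a, b[ -> 0 <= (f * (fun s => expR (C * s + 0)))^`()%classic x.
    move=> x /inab xab; rewrite derive1E (@derive_val _ _ _ _ _ _ _ (gen C x xab)).
    rewrite pmulr_rge0 ?expR_gt0 //.
    have := fb x xab; rewrite -subr_ge0 => h.
    have := ler_norm (- df x); rewrite normrN => h2.
    lra.
  have := @ger0_derive1_ndecr R _ a b d1 d2 (gcont C) r b ar rb (lexx b).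
  move=> H; rewrite andbT; apply: le_trans H _.
  by rewrite (_ : (f * _) b = f b * expR (C * b + 0)) // fb0 mul0r.
Qed.

Lemma norm_mul_le (x y : R) : `|x * y| <= (x * x + y * y) / 2.
Proof.
have h1 := sqr_ge0 (x - y); have h2 := sqr_ge0 (x + y).
rewrite ler_norml; apply/andP; split; rewrite !expr2 in h1 h2; nra.
Qed.

Lemma sum_sq_ge0 n m (X : 'M[R]_(n, m)) : 0 <= \sum_i \sum_j X i j * X i j.
Proof. by apply: sumr_ge0 => i _; apply: sumr_ge0 => j _; rewrite -expr2 sqr_ge0. Qed.

Lemma quadL n (X A : 'M[R]_n) (K : R) : (forall i k, `|A i k| <= K) ->
  `|\sum_i \sum_j X i j * (A *m X) i j| <= K * n%:R * \sum_i \sum_j X i j * X i j.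
Proof.
move=> hA.
case: n X A hA => [|n'] X A hA; first by rewrite !big_ord0 normr0 !mulr0.
have K0 : 0 <= K by exact: le_trans (normr_ge0 _) (hA ord0 ord0).
apply: le_trans (ler_norm_sum _ _ _) _.
apply: (@le_trans _ _ (\sum_i \sum_j \sum_k K * ((X i j * X i j + X k j * X k j) / 2))).
  apply: ler_sum => i _; apply: le_trans (ler_norm_sum _ _ _) _.
  apply: ler_sum => j _; rewrite mxE mulr_sumr.
  apply: le_trans (ler_norm_sum _ _ _) _.
  apply: ler_sum => k _.
  rewrite mulrCA normrM; apply: ler_pM => //.
  exact: norm_mul_le.
pose a := fun (i j : 'I_n'.+1) => X i j * X i j.
have e1 : \sum_(i < n'.+1) \sum_(j < n'.+1) \sum_(k < n'.+1) K * ((a i j + a k j) / 2) =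
   K / 2 * (\sum_(i < n'.+1) \sum_(j < n'.+1) \sum_(k < n'.+1) a i j) + K / 2 * (\sum_(i < n'.+1) \sum_(j < n'.+1) \sum_(k < n'.+1) a k j).
  rewrite !mulr_sumr -big_split /=; apply: eq_bigr => i _.
  rewrite !mulr_sumr -big_split /=; apply: eq_bigr => j _.
  rewrite !mulr_sumr -big_split /=; apply: eq_bigr => k _; by field.
have e2 : \sum_(i < n'.+1) \sum_(j < n'.+1) \sum_(k < n'.+1) a i j = n'.+1%:R * \sum_(i < n'.+1) \sum_(j < n'.+1) a i j.
  rewrite mulr_sumr; apply: eq_bigr => i _; rewrite mulr_sumr; apply: eq_bigr => j _.
  by rewrite sumr_const card_ord mulr_natl.
have e3 : \sum_(i < n'.+1) \sum_(j < n'.+1) \sum_(k < n'.+1) a k j = n'.+1%:R * \sum_(i < n'.+1) \sum_(j < n'.+1) a i j.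
  under eq_bigr => i _ do rewrite exchange_big /=.
  by rewrite sumr_const card_ord mulr_natl.
rewrite /a /= in e1 e2 e3; rewrite e1 e2 e3 le_eqVlt; apply/orP; left; apply/eqP; by field.
Qed.

Lemma quadR n (X B : 'M[R]_n) (K : R) : (forall k j, `|B k j| <= K) ->
  `|\sum_i \sum_j X i j * (X *m B) i j| <= K * n%:R * \sum_i \sum_j X i j * X i j.
Proof.
move=> hB.
have h := @quadL n X^T B^T K (fun i k => ltac:(by rewrite mxE; exact: hB)).
have e1 : \sum_i \sum_j X i j * (X *m B) i j =
          \sum_i \sum_j X^T i j * (B^T *m X^T) i j.
  rewrite exchange_big; apply: eq_bigr => i _; apply: eq_bigr => j _.
  by rewrite -trmx_mul !mxE.
have e2 : \sum_i \sum_j X i j * X i j = \sum_i \sum_j X^T i j * X^T i j.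
  rewrite exchange_big; apply: eq_bigr => i _; apply: eq_bigr => j _.
  by rewrite !mxE.
by rewrite e1 e2.
Qed.

Lemma mulmx_sq_ge0 (x : R) : 0 <= x * x.
Proof. by rewrite -expr2 sqr_ge0. Qed.

Lemma mx_ode_zero n (X X' A B : R -> 'M[R]_n) (a b K : R) :
  (forall r, a <= r <= b -> forall i j, is_derive r 1 (fun s => X s i j) (X' r i j)) ->
  (forall r, a <= r <= b -> X' r = A r *m X r + X r *m B r) ->
  (forall r, a <= r <= b -> forall i j, `|A r i j| <= K /\ `|B r i j| <= K) ->
  (X a = 0 \/ X b = 0) -> forall r, a <= r <= b -> X r = 0.
Proof.
move=> hd hX' hK hab.
pose f := fun s => \sum_i \sum_j X s i j * X s i j.
pose df := fun r => \sum_i \sum_j (X r i j *: X' r i j + X r i j *: X' r i j).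
have fd : forall r, a <= r <= b -> is_derive r 1 f (df r).
  move=> r rab.
  have -> : f = \sum_i \sum_j (fun s => X s i j * X s i j).
    apply/funext => s; rewrite /f fct_sumE; apply: eq_bigr => i _.
    by rewrite fct_sumE.
  apply: is_derive_sum => i; apply: is_derive_sum => j.
  exact: is_deriveM (hd r rab i j) (hd r rab i j).
have fp : forall r, a <= r <= b -> 0 <= f r by move=> r _; exact: sum_sq_ge0.
have fb : forall r, a <= r <= b -> `|df r| <= (4 * K * n%:R) * f r.
  move=> r rab.
  have e : df r = 2 * (\sum_i \sum_j X r i j * (A r *m X r) i j) +
                  2 * (\sum_i \sum_j X r i j * (X r *m B r) i j).
    rewrite !mulr_sumr -big_split /=; apply: eq_bigr => i _.
    rewrite !mulr_sumr -big_split /=; apply: eq_bigr => j _.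
    rewrite hX' // mxE /GRing.scale /=; ring.
  rewrite e; apply: le_trans (ler_normD _ _) _.
  rewrite !normrM ger0_norm //.
  have h1 := @quadL n (X r) (A r) K (fun i k => proj1 (hK r rab i k)).
  have h2 := @quadR n (X r) (B r) K (fun i k => proj2 (hK r rab i k)).
  rewrite /f; lra.
have f0 : forall r, a <= r <= b -> f r = 0.
  apply: (@gronwall_gen f df a b _ fd fp fb).
  case: hab => h; [left|right]; rewrite /f h;
    by apply: big1 => i _; apply: big1 => j _; rewrite mxE mulr0.
move=> r rab; apply/matrixP => i j; rewrite mxE.
have h0 := f0 r rab; rewrite /f in h0.
have h1 : \sum_k X r i k * X r i k = 0.
  by apply: (psumr_eq0P _ h0) => // i' _; apply: sumr_ge0 => k _; exact: mulmx_sq_ge0.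
have h2 : X r i j * X r i j = 0.
  by apply: (psumr_eq0P _ h1) => // k _; exact: mulmx_sq_ge0.
by move/eqP: h2; rewrite mulf_eq0 orbb => /eqP.
Qed.

Lemma bound_fun (g : R -> R) (a b : R) : a <= b ->
  (forall r, a <= r <= b -> derivable g r 1) ->
  exists K, 0 <= K /\ forall r, a <= r <= b -> `|g r| <= K.
Proof.
move=> ab hd.
have c : {within `[a, b], continuous g}.
  by apply: derivable_within_continuous => x; rewrite in_itv /= => /hd.
have [c1 _ h1] := EVT_max ab c.
have [c2 _ h2] := EVT_min ab c.
exists (`|g c1| + `|g c2|); split; first by rewrite addr_ge0.
move=> r rab; have r1 := h1 r; have r2 := h2 r.
rewrite in_itv /= rab in r1 r2.
have := r1 isT; have := r2 isT.
have := ler_norm (g c1); have := ler_norm (- g c2); rewrite normrN.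
have := normr_ge0 (g c1); have := normr_ge0 (g c2).
rewrite ler_norml => *; apply/andP; split; lra.
Qed.

Lemma bound_entries n (X : R -> 'M[R]_n) (a b : R) : a <= b ->
  (forall r, a <= r <= b -> forall i j, derivable (fun s => X s i j) r 1) ->
  exists K, forall r, a <= r <= b -> forall i j, `|X r i j| <= K.
Proof.
move=> ab hd.
have : forall ij : 'I_n * 'I_n, exists K, 0 <= K /\
   forall r, a <= r <= b -> `|X r ij.1 ij.2| <= K.
  by move=> [i j]; apply: bound_fun => // r rab; exact: hd.
move=> /choice [Kf hK].
exists (\sum_ij Kf ij) => r rab i j.
apply: le_trans (proj2 (hK (i, j)) r rab) _.
rewrite (bigD1 (i, j)) //= lerDl; apply: sumr_ge0 => ij _; exact: proj1 (hK ij).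
Qed.
End Hyp.

Section Diag.
Variable R : realType.
Variable n : nat.

Definition dg (u : 'I_n -> R) : 'M[R]_n := \matrix_(i, j) ((i == j)%:R * u i).

Lemma dg_mull (u : 'I_n -> R) m (A : 'M[R]_(n, m)) i j : (dg u *m A) i j = u i * A i j.
Proof.
rewrite mxE (bigD1 i) //= mxE eqxx mul1r big1 ?addr0 // => k /negbTE ki.
by rewrite mxE eq_sym ki mul0r mul0r.
Qed.

Lemma dg_mulr m (A : 'M[R]_(m, n)) (u : 'I_n -> R) i j : (A *m dg u) i j = A i j * u j.
Proof.
rewrite mxE (bigD1 j) //= mxE eqxx mul1r big1 ?addr0 // => k /negbTE kj.
by rewrite mxE kj mul0r mulr0.
Qed.

Lemma dgE (u : 'I_n -> R) i j : dg u i j = (i == j)%:R * u i.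
Proof. by rewrite mxE. Qed.

Lemma dg_mul (u v : 'I_n -> R) : dg u *m dg v = dg (fun i => u i * v i).
Proof.
apply/matrixP => i j; rewrite dg_mull !mxE.
by case: (eqVneq i j) => [->|_]; rewrite ?mul1r ?mul0r ?mulr0.
Qed.

Lemma dg_tr (u : 'I_n -> R) : (dg u)^T = dg u.
Proof.
apply/matrixP => i j; rewrite !mxE eq_sym.
by case: (eqVneq j i) => [->|_]; rewrite ?mul1r ?mul0r.
Qed.

Lemma dgD (u v : 'I_n -> R) : dg u + dg v = dg (fun i => u i + v i).
Proof. by apply/matrixP => i j; rewrite !mxE mulrDr. Qed.

Lemma dgN (u : 'I_n -> R) : - dg u = dg (fun i => - u i).
Proof. by apply/matrixP => i j; rewrite !mxE mulrN. Qed.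

Lemma dgZ (a : R) (u : 'I_n -> R) : a *: dg u = dg (fun i => a * u i).
Proof. by apply/matrixP => i j; rewrite !mxE mulrCA. Qed.

Lemma dg_quad (x y : 'cV[R]_n) (u : 'I_n -> R) :
  (x^T *m dg u *m y) ord0 ord0 = \sum_i x i ord0 * u i * y i ord0.
Proof.
rewrite mxE; apply: eq_bigr => k _.
by rewrite dg_mulr mxE.
Qed.

Lemma dg_inv (u : 'I_n -> R) : (forall i, u i != 0) ->
  invmx (dg u) = dg (fun i => (u i)^-1).
Proof.
move=> h.
have e : dg u *m dg (fun i => (u i)^-1) = 1%:M.
  rewrite dg_mul; apply/matrixP => i j; rewrite !mxE divff ?h //.
  by rewrite mulr1.
have [uA _] := mulmx1_unit e.
by rewrite -[LHS]mulmx1 -e mulKmx.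
Qed.

Lemma diag_dg (D : 'M[R]_n) : is_diag_mx D -> D = dg (fun i => D i i).
Proof.
move=> /is_diag_mxP h; apply/matrixP => i j; rewrite mxE.
case: (eqVneq i j) => [->|ij]; first by rewrite mul1r.
by rewrite mul0r h.
Qed.

End Diag.

Section Hyp2.
Variable R : realType.

Lemma is_derive_cmul (f : R -> R) (k x df : R) : is_derive x 1 f df ->
  is_derive x 1 (fun s => k * f s) (k * df).
Proof.
move=> h; have := is_deriveM (is_derive_cst k x 1) h.
move=> h2; apply: is_derive_eq; rewrite /GRing.scale /= /cst; ring.
Qed.

Lemma dch (c t x : R) :
  is_derive x 1 (fun r => coshR (c * (t - r))) (- c * sinhR (c * (t - x))).
Proof.
have -> : (fun r => coshR (c * (t - r))) = (fun r => coshR ((- c) * r + c * t)).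
  by apply/funext => r; congr coshR; ring.
have -> : c * (t - x) = (- c) * x + c * t by ring.
exact: is_derive_coshR_lin.
Qed.

Lemma dsh (c t x : R) :
  is_derive x 1 (fun r => sinhR (c * (t - r))) (- c * coshR (c * (t - x))).
Proof.
have -> : (fun r => sinhR (c * (t - r))) = (fun r => sinhR ((- c) * r + c * t)).
  by apply/funext => r; congr sinhR; ring.
have -> : c * (t - x) = (- c) * x + c * t by ring.
exact: is_derive_sinhR_lin.
Qed.

Lemma dtanh (c t x : R) :
  is_derive x 1 (fun r => sinhR (c * (t - r)) / coshR (c * (t - r)))
    (- c / coshR (c * (t - x)) ^+ 2).
Proof.
have ch0 := coshR_gt0 (c * (t - x)).
have h1 := dsh c t x.
have h2 := @is_deriveV R (fun r => coshR (c * (t - r))) x _ 1 (lt0r_neq0 ch0) (dch c t x).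
have h3 := is_deriveM h1 h2.
apply: is_derive_eq.
have e := coshR_sinhR (c * (t - x)).
rewrite /GRing.scale /=.
rewrite -[in RHS]mulN1r -e.
field; exact: lt0r_neq0.
Qed.

Lemma dinvch (c t x : R) :
  is_derive x 1 (fun r => (coshR (c * (t - r)))^-1)
    (c * sinhR (c * (t - x)) / coshR (c * (t - x)) ^+ 2).
Proof.
have ch0 := coshR_gt0 (c * (t - x)).
have h2 := @is_deriveV R (fun r => coshR (c * (t - r))) x _ 1 (lt0r_neq0 ch0) (dch c t x).
apply: is_derive_eq.
rewrite /GRing.scale /=.
field; exact: lt0r_neq0.
Qed.
End Hyp2.

Section Simp.
Variable R : realType.
Variable n : nat.

Lemma sq2 : (Num.sqrt 2 *: (1%:M : 'M[R]_n)) *m (Num.sqrt 2 *: (1%:M : 'M[R]_n))^T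
   = (2 : R)%:M.
Proof.
by rewrite scalemx1 tr_scalar_mx -scalar_mxM -expr2 sqr_sqrtr.
Qed.

Lemma ric_simp (P D : 'M[R]_n) :
  - (0 : 'M[R]_n)^T *m P - P *m 0 +
  P *m (Num.sqrt 2 *: (1%:M : 'M[R]_n)) *m (Num.sqrt 2 *: (1%:M : 'M[R]_n))^T *m P
  - 2 *: D = 2 *: (P *m P) - 2 *: D.
Proof.
rewrite trmx0 oppr0 mul0mx mulmx0 subr0 add0r -(mulmxA P) sq2 mul_mx_scalar.
by rewrite scalemxAl.
Qed.

Lemma ahat_simp (P : R -> 'M[R]_n) r :
  Ahat (fun _ => 0) (fun _ => Num.sqrt 2 *: (1%:M : 'M[R]_n)) P r = - 2 *: P r.
Proof.
by rewrite /Ahat sq2 mul_scalar_mx sub0r scaleNr.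
Qed.
End Simp.

Lemma key1 (R : realType) (q S C : R) : C != 0 -> C ^+ 2 - S ^+ 2 = 1 ->
  2 * ((q * (S / C)) * (q * (S / C))) - 2 * q ^+ 2 = q * (- (2 * q) / C ^+ 2).
Proof.
move=> hC e; apply/eqP; rewrite -subr_eq0; apply/eqP.
transitivity (2 * q ^+ 2 / C ^+ 2 * (1 - (C ^+ 2 - S ^+ 2))); first by field.
by rewrite e subrr mulr0.
Qed.

Lemma addmxE (R : realType) m p (A B : 'M[R]_(m, p)) i j : (A + B) i j = A i j + B i j.
Proof. by rewrite mxE. Qed.

Lemma is_derive_veq (R : realType) (f : R -> R) (x df df' : R) :
  is_derive x 1 f df -> df = df' -> is_derive x 1 f df'.
Proof. by move=> h <-. Qed.

Theorem proposition3 (R : realType) (n : nat) (t0 t : R) (D : 'M[R]_n)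
  (P : R -> 'M[R]_n) (Phi : R -> R -> 'M[R]_n) :
  0 <= t0 -> t0 < t ->
  is_diag_mx D -> (forall i, 0 < D i i) ->
  riccati_sol (fun _ => 0) (fun _ => Num.sqrt 2 *: (1%:M : 'M[R]_n))
    (fun _ => 2 *: D) t0 t 0 P ->
  transition_mx (Ahat (fun _ => 0) (fun _ => Num.sqrt 2 *: (1%:M : 'M[R]_n)) P)
    t0 t Phi ->
  forall x y : 'cV[R]_n,
    let M := Mtt0 P Phi
      (gramian (fun _ => Num.sqrt 2 *: (1%:M : 'M[R]_n)) Phi t0 t) t0 t in
    let w := fun i => 2 * Num.sqrt (D i i) in
    2^-1 * ((col_mx x y)^T *m M *m col_mx x y) ord0 ord0 =
    2^-1 * \sum_(i < n)
      (w i * (x i ord0 ^+ 2 + y i ord0 ^+ 2) * coshR (w i * (t - t0))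
         - 2 * w i * x i ord0 * y i ord0) / (2 * sinhR (w i * (t - t0))).
Proof.
move=> t0ge0 t0t diagD Dpos [Pt hric] [Phid hPhi] x y M w.
pose q := fun i => Num.sqrt (D i i).
have q0 : forall i, 0 < q i by move=> i; rewrite sqrtr_gt0.
have qq : forall i, q i ^+ 2 = D i i by move=> i; rewrite sqr_sqrtr // ltW.
have wq : forall i, w i = 2 * q i by [].
have w0 : forall i, 0 < w i by move=> i; rewrite wq mulr_gt0.
pose pb := fun i s => q i * (sinhR (w i * (t - s)) / coshR (w i * (t - s))).
pose Pb := fun s => dg (fun i => pb i s).
have Dd := diag_dg diagD.
have dPb : forall (s : R) (i j : 'I_n), is_derive s 1 (fun r => Pb r i j)
    ((2 *: (Pb s *m Pb s) - 2 *: D) i j).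
  move=> s i j.
  have -> : (fun r => Pb r i j) = (fun r => (i == j)%:R *
      (q i * (sinhR (w i * (t - r)) / coshR (w i * (t - r))))).
    by apply/funext => r; rewrite /Pb dgE.
  have -> : (2 *: (Pb s *m Pb s) - 2 *: D) i j =
      (i == j)%:R * (q i * (- w i / coshR (w i * (t - s)) ^+ 2)).
    rewrite Dd /Pb dg_mul !mxE.
    case: eqVneq => [->|_]; last by rewrite !mul0r !mulr0 subrr.
    rewrite !mul1r -qq wq key1 //; first exact: lt0r_neq0 (coshR_gt0 _).
    exact: coshR_sinhR.
  exact: is_derive_cmul (is_derive_cmul _ (dtanh _ _ _)).
have hric' : forall s, t0 <= s <= t -> forall i j,
    is_derive s 1 (fun r => P r i j) ((2 *: (P s *m P s) - 2 *: D) i j).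
  by move=> s hs i j; rewrite -ric_simp; exact: hric.
have [K2 hK2] := bound_entries (X := Pb) (ltW t0t)
  (fun r hr i j => ltac:(by case: (dPb r i j))).
have PA : forall s, t0 <= s <= t -> P s = Pb s.
  have [K1 hK1] := bound_entries (X := P) (ltW t0t)
    (fun r hr i j => ltac:(by case: (hric' r hr i j))).
  suff h : forall s, t0 <= s <= t -> P s - Pb s = 0.
    by move=> s hs; apply/eqP; rewrite -subr_eq0 h.
  apply: (@mx_ode_zero _ n (fun s => P s - Pb s)
     (fun s => (2 *: (P s *m P s) - 2 *: D) - (2 *: (Pb s *m Pb s) - 2 *: D))
     (fun s => 2 *: P s) (fun s => 2 *: Pb s) t0 t (2 * (`|K1| + `|K2|))).
  - move=> r hr i j.
    have -> : (fun s => (P s - Pb s) i j) = (fun s => P s i j - Pb s i j).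
      by apply: funext => s; rewrite !mxE.
    apply: is_derive_veq (is_deriveB (hric' r hr i j) (dPb r i j)) _.
    by rewrite !mxE.
  - move=> r hr.
    rewrite opprB addrA subrK mulmxBr mulmxBl -!scalemxAl -!scalemxAr.
    by rewrite addrA subrK.
  - move=> r hr i j; rewrite [(2 *: P r) i j]mxE [(2 *: Pb r) i j]mxE !normrM normr_nat.
    move: (hK1 r hr i j) (hK2 r hr i j) (ler_norm K1) (ler_norm K2) (normr_ge0 K1) (normr_ge0 K2) => *.
    by split; lra.
  - by right; rewrite Pt /Pb; apply/matrixP => i j; rewrite !mxE /pb subrr mulr0 sinhR0 mul0r mulr0 mulr0 subrr.
have ch0 : forall i s, coshR (w i * (t - s)) != 0.
  by move=> i s; exact: lt0r_neq0 (coshR_gt0 _).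
pose Phb := fun r s => dg (fun i => coshR (w i * (t - r)) / coshR (w i * (t - s))).
have dPhb : forall (r s : R) (i j : 'I_n), is_derive r 1 (fun u => Phb u s i j)
    (((- 2 *: Pb r) *m Phb r s) i j).
  move=> r s i j.
  have -> : (fun u => Phb u s i j) = (fun u => (i == j)%:R *
      ((coshR (w i * (t - s)))^-1 * coshR (w i * (t - u)))).
    by apply: funext => u; rewrite /Phb dgE [coshR _ / _]mulrC.
  apply: is_derive_veq (is_derive_cmul _ (is_derive_cmul _ (dch _ _ _))) _.
  rewrite /Pb /Phb dgZ dg_mul dgE; congr (_ * _).
  by rewrite /pb wq; field; rewrite !(lt0r_neq0 (coshR_gt0 _)).
have PhiB : forall s r, t0 <= s -> s <= r -> r <= t -> Phi r s = Phb r s.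
  move=> s r h1 h2 h3.
  have hs : t0 <= s <= t by rewrite h1 (le_trans h2 h3).
  suff h : forall u, s <= u <= t -> Phi u s - Phb u s = 0.
    by apply/eqP; rewrite -subr_eq0 h // h2 h3.
  apply: (@mx_ode_zero _ n (fun u => Phi u s - Phb u s)
     (fun u => (- 2 *: Pb u) *m (Phi u s - Phb u s))
     (fun u => - 2 *: Pb u) (fun _ => 0) s t (2 * `|K2|)).
  - move=> u /andP[hu1 hu2] i j.
    have hu : t0 <= u <= t by rewrite hu2 (le_trans h1 hu1).
    have -> : (fun v => (Phi v s - Phb v s) i j) = (fun v => Phi v s i j - Phb v s i j).
      by apply: funext => v; rewrite !mxE.
    apply: is_derive_veq (is_deriveB (hPhi u s hu hs i j) (dPhb u s i j)) _.
    by rewrite ahat_simp (PA u hu) mulmxBr !mxE.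
  - by move=> u _; rewrite mulmx0 addr0.
  - move=> u /andP[hu1 hu2] i j.
    have hu : t0 <= u <= t by rewrite hu2 (le_trans h1 hu1).
    have -> : (- 2 *: Pb u) i j = - 2 * Pb u i j by rewrite mxE.
    have -> : (0 : 'M[R]_n) i j = 0 by rewrite mxE.
    rewrite normr0 normrM normrN normr_nat.
    move: (hK2 u hu i j) (ler_norm K2) (normr_ge0 K2) (normr_ge0 (Pb u i j)) => *.
    by split; lra.
  - left; rewrite Phid //; apply/matrixP => i j; rewrite !mxE divff ?ch0 //.
    by rewrite mulr1 subrr.
have gramE : gramian (fun _ => Num.sqrt 2 *: (1%:M : 'M[R]_n)) Phi t0 t =
    dg (fun i => 2 / w i * (sinhR (w i * (t - t0)) / coshR (w i * (t - t0)))).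
  apply/matrixP => i j; rewrite /gramian mxE dgE.
  pose g := fun s => (i == j)%:R * (2 * ((coshR (w i * (t - s)))^-1 *
                                          (coshR (w i * (t - s)))^-1)).
  transitivity (\int[lebesgue_measure]_(s in `[t0, t]) g s).
    apply: eq_Rintegral => s; rewrite inE /= in_itv /= => /andP[hs1 hs2].
    rewrite (PhiB s t) // -(mulmxA (Phb t s)) sq2 mul_mx_scalar /Phb dg_tr.
    rewrite -scalemxAl dg_mul mxE dgE /g subrr mulr0 coshR0; ring.
  pose F := fun s => (i == j)%:R * (- (2 / w i) *
      (sinhR (w i * (t - s)) / coshR (w i * (t - s)))).
  have dF : forall s : R, is_derive s 1 F (g s).
    move=> s; apply: is_derive_veq (is_derive_cmul _ (is_derive_cmul _ (dtanh _ _ _))) _.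
    rewrite /g; congr (_ * _); field.
    by rewrite (lt0r_neq0 (coshR_gt0 _)) (lt0r_neq0 (w0 i)).
  have dgg : forall s : R, derivable g s 1.
    move=> s; have := is_derive_cmul (i == j)%:R (is_derive_cmul 2
       (is_deriveM (dinvch (w i) t s) (dinvch (w i) t s))).
    by case.
  rewrite /Rintegral (@continuous_FTC2 R g F t0 t t0t).
  - rewrite -EFinB /= /F subrr mulr0 sinhR0 coshR0; ring.
  - by apply: derivable_within_continuous => s _; exact: dgg.
  - split.
    + by move=> s _; case: (dF s).
    + apply: cvg_at_right_filter; apply: differentiable_continuous.
      by apply/derivable1_diffP; case: (dF t0).
    + apply: cvg_at_left_filter; apply: differentiable_continuous.
      by apply/derivable1_diffP; case: (dF t).
  - by move=> s _; rewrite derive1E; case: (dF s).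
have PhiT : Phi t t0 = dg (fun i => (coshR (w i * (t - t0)))^-1).
  rewrite PhiB // ?lexx ?ltW // /Phb; congr dg; apply: funext => i.
  by rewrite subrr mulr0 coshR0 mul1r.
have sh0 : forall i, 0 < sinhR (w i * (t - t0)).
  by move=> i; apply: sinhR_gt0; rewrite mulr_gt0 // subr_gt0.
have gi0 : forall i, 2 / w i * (sinhR (w i * (t - t0)) / coshR (w i * (t - t0))) != 0.
  move=> i; apply: lt0r_neq0; apply: mulr_gt0; first exact: divr_gt0.
  apply: divr_gt0; [exact: sh0 | exact: coshR_gt0].
rewrite /M /Mtt0 /= gramE PhiT (PA t0) ?lexx ?ltW // /Pb dg_inv // dg_tr !dg_mul dgD !dgN.
rewrite tr_col_mx mul_row_block mul_row_col !mulmxDl !addmxE !dg_quad -!big_split /=.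
congr (_ * _); apply: eq_bigr => i _.
have qw : q i = w i / 2 by rewrite wq; field.
rewrite /pb qw.
set c := coshR (w i * (t - t0)); set sn := sinhR (w i * (t - t0)).
have c0 : c != 0 by exact: ch0.
have s0 : sn != 0 by exact: lt0r_neq0 (sh0 i).
have wn0 : w i != 0 by exact: lt0r_neq0 (w0 i).
have e : c ^+ 2 - sn ^+ 2 = 1 by exact: coshR_sinhR.
apply/eqP; rewrite -subr_eq0; apply/eqP.
transitivity (x i ord0 ^+ 2 * w i / (2 * sn * c) * (1 - (c ^+ 2 - sn ^+ 2))).
  by field; rewrite c0 s0 wn0.
by rewrite e subrr mulr0.
Qed.
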